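(* Let $X_1,\ldots,X_n$ be non-empty sets, $\Omega=X_1\times\cdots\times X_n$, and let $S\subset\Omega$ be a good set with related components $\{R_\alpha\}$. For each $i$, let $E_i$ be the equivalence relation on $\Pi_iS$ defined by: $x_iE_iy_i$ iff there is a finite sequence of related components $R_1,\ldots,R_m$ of $S$ with $x_i\in\Pi_iR_1$, $y_i\in\Pi_iR_m$ and $\Pi_iR_j\cap\Pi_iR_{j+1}\neq\emptyset$ for $1\le j\le m-1$. Let $[x_i]$ denote the $E_i$-class of $x_i$ and $\mathcal F_i$ the set of $E_i$-classes. Let $C\subset S$ be a cross-section of the related components (i.e. $C$ contains exactly one point of each $R_\alpha$), and define $\phi:C\to\mathcal F_1\times\cdots\times\mathcal F_n$ by $\phi(x_1,\ldots,x_n)=([x_1],\ldots,[x_n])$. Then $\phi(C)$ is a good subset of $\mathcal F_1\times\cdots\times\mathcal F_n$, and $S$ is full if and only if $\phi(C)$ is full.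
   Context: For a product $Y_1\times\cdots\times Y_n$ of non-empty sets, $\Pi_i$ denotes the canonical projection onto $Y_i$. A subset $T$ of such a product is good if every complex-valued function $f$ on $T$ can be written as $f(y_1,\ldots,y_n)=u_1(y_1)+\cdots+u_n(y_n)$ on $T$ for suitable complex-valued functions $u_i$ on $Y_i$. $T$ is full if it is a maximal good subset of $\Pi_1T\times\cdots\times\Pi_nT$. For a good set $S$, two points of $S$ are related if some finite full subset of $S$ contains both; this is an equivalence relation whose classes are the related components of $S$. *)

(* Defs.v *)
From HB Require Import structures.
From mathcomp Require Import all_boot all_order all_algebra.
From mathcomp Require Import boolp classical_sets functions cardinality.
From mathcomp Require Import Rstruct.
From mathcomp Require Import complex.
Set Implicit Arguments. Unset Strict Implicit. Unset Printing Implicit Defensive.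
Import GRing.Theory Num.Theory.
Local Open Scope classical_set_scope.
Local Open Scope ring_scope.

Definition Cx : Type := complex Rdefinitions.R.

Definition prodT (n : nat) (Y : 'I_n -> Type) := forall i : 'I_n, Y i.

Definition proj (n : nat) (Y : 'I_n -> Type) (i : 'I_n) (T : set (prodT Y))
  : set (Y i) := [set y | exists t, T t /\ t i = y].
Arguments proj {n Y} i T _.

Definition good (n : nat) (Y : 'I_n -> Type) (T : set (prodT Y)) : Prop :=
  forall f : prodT Y -> Cx,
    exists u : forall i : 'I_n, Y i -> Cx,
      forall y, T y -> f y = \sum_(i < n) u i (y i).

Definition box (n : nat) (Y : 'I_n -> Type) (T : set (prodT Y)) : set (prodT Y) :=
  [set y | forall i, proj i T (y i)].

Definition full (n : nat) (Y : 'I_n -> Type) (T : set (prodT Y)) : Prop :=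
  good T /\
  forall T' : set (prodT Y), T `<=` T' -> T' `<=` box T -> good T' -> T' = T.

Definition related (n : nat) (Y : 'I_n -> Type) (S : set (prodT Y)) (x y : prodT Y)
  : Prop :=
  exists F : set (prodT Y), [/\ finite_set F, full F, F `<=` S, F x & F y].

Definition related_component (n : nat) (Y : 'I_n -> Type) (S : set (prodT Y))
  (R : set (prodT Y)) : Prop :=
  exists x, S x /\ R = [set y | related S x y].

Definition E (n : nat) (Y : 'I_n -> Type) (S : set (prodT Y)) (i : 'I_n)
  (a b : Y i) : Prop :=
  exists (m : nat) (Rs : nat -> set (prodT Y)),
    [/\ (forall j, (j <= m)%N -> related_component S (Rs j)),
        proj i (Rs 0%N) a, proj i (Rs m) b &
        (forall j, (j < m)%N -> proj i (Rs j) `&` proj i (Rs j.+1) !=set0)].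
Arguments E {n Y} S i a b.

Definition Eclass (n : nat) (Y : 'I_n -> Type) (S : set (prodT Y)) (i : 'I_n)
  (a : Y i) : set (Y i) := [set b | E S i a b].
Arguments Eclass {n Y} S i a _.

Definition Fcl (n : nat) (Y : 'I_n -> Type) (S : set (prodT Y)) (i : 'I_n) : Type :=
  {A : set (Y i) | exists a, proj i S a /\ A = Eclass S i a}.

Definition cross_section (n : nat) (Y : 'I_n -> Type) (S : set (prodT Y))
  (C : set (prodT Y)) : Prop :=
  C `<=` S /\
  forall R, related_component S R -> exists! c, C c /\ R c.

Definition phiC (n : nat) (Y : 'I_n -> Type) (S : set (prodT Y)) (C : set (prodT Y))
  : set (prodT (Fcl S)) :=
  [set z | exists c, C c /\ forall i, proj1_sig (z i) = Eclass S i (c i)].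
Arguments phiC {n Y} S C _.
Arguments Fcl {n Y} S i.

(* Main.v *)
Require Import Defs.
From mathcomp Require Import all_boot classical_sets.
From mathcomp Require Import all_algebra boolp Rstruct complex.
From mathcomp Require Import zify ring.
Set Implicit Arguments. Unset Strict Implicit. Unset Printing Implicit Defensive.
Import GRing.Theory Num.Theory.
Local Open Scope classical_set_scope.
Local Open Scope ring_scope.

Section Gen.
Variables (n : nat) (Y : 'I_n -> Type).

Definition sgm (u : forall i, Y i -> Cx) (y : prodT Y) : Cx := \sum_(i < n) u i (y i).

Definition rigid (T : set (prodT Y)) := forall u : forall i, Y i -> Cx,
  (forall y, T y -> sgm u y = 0) ->
  forall i a b, proj i T a -> proj i T b -> u i a = u i b.

Lemma good_add (F : set (prodT Y)) (p : prodT Y) (z : forall i, Y i -> Cx) :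
  good F -> (forall y, F y -> sgm z y = 0) -> sgm z p != 0 -> good (F `|` [set p]).
Proof.
move=> gF z0 zp f; have [w hw] := gF f.
pose lam := (f p - sgm w p) / sgm z p.
exists (fun i x => w i x + lam * z i x).
have E1: forall y, \sum_(i<n) (w i (y i) + lam * z i (y i)) = sgm w y + lam * sgm z y.
  by move=> y; rewrite big_split /= -mulr_sumr.
move=> y [Fy|->]; rewrite E1.
- by rewrite z0 // mulr0 addr0 hw.
- by rewrite /lam mulfVK // addrC subrK.
Qed.

Lemma full_rigidk (F : set (prodT Y)) u k i a b : full F ->
  (forall y, F y -> sgm u y = k) -> proj i F a -> proj i F b -> u i a = u i b.
Proof.
move=> [gF mF] hk.
suff H: forall t b, F t -> proj i F b -> u i (t i) = u i b.
  move=> [t [Ft <-]] pb; exact: H.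
move=> t b' Ft pb; apply: contrapT => neq.
have [p [pi pj]] : exists p : prodT Y, p i = b' /\ forall j, i != j -> p j = t j.
  by exists (dfwith t b'); split; [exact: dfwith_in | move=> j; exact: dfwith_out].
have e1 : sgm u p = u i b' + \sum_(j < n | j != i) u j (t j).
  rewrite /sgm (bigD1 i) //= pi; congr (_ + _); apply: eq_bigr => j ji.
  by rewrite pj // eq_sym.
have e2 : sgm u t = u i (t i) + \sum_(j < n | j != i) u j (t j).
  by rewrite /sgm (bigD1 i).
have sp: sgm u p = k + (u i b' - u i (t i)).
  rewrite e1 -(hk t Ft) e2; ring.
pose z j x := u j x - (if j == i then k else 0).
have sz y : sgm z y = sgm u y - k.
  by rewrite /sgm /z sumrB -big_mkcond big_pred1_eq.
have ne : u i b' - u i (t i) != 0 by rewrite subr_eq0; apply/eqP => e; apply: neq; rewrite e.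
have gFp : good (F `|` [set p]).
  apply: (good_add (z := z) gF).
    by move=> y Fy; rewrite sz hk // subrr.
  by rewrite sz sp (addrC k) addrK.
have := mF (F `|` [set p]) (fun y Fy => or_introl Fy) _ gFp.
have Hb : F `|` [set p] `<=` box F.
  move=> y [Fy|->] j; first by exists y.
  case: (eqVneq i j) => [<-|nij]; first by rewrite pi.
  by rewrite pj //; exists t.
move=> /(_ Hb) e.
have Fp : F p by rewrite -e; right.
by move: (hk p Fp); rewrite sp => /eqP; rewrite -subr_eq0 addrC addKr (negbTE ne).
Qed.

Lemma rigid_full (F : set (prodT Y)) : good F -> rigid F -> full F.
Proof.
move=> gF rF; split=> // T' FT' T'b gT'.
apply/seteqP; split=> // p T'p; apply: contrapT => nFp.
have [u hu] := gT' (fun y => if pselect (y = p) then 1 else 0).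
have u0 : forall y, F y -> sgm u y = 0.
  move=> y Fy; rewrite /sgm -hu; last exact: FT'.
  by case: pselect => // e; subst.
have sp : sgm u p = 0.
  case: (pselect (exists i : 'I_n, True)) => [[i0 _]|ni].
    have [t [Ft _]] := T'b p T'p i0.
    rewrite -(u0 t Ft); apply: eq_bigr => i _.
    apply: (rF u u0 i) (T'b p T'p i) _; by exists t.
  by rewrite /sgm big1 // => i _; exfalso; apply: ni; exists i.
have := hu p T'p; destruct (pselect (p = p)) as [ep|n0]; last by case: n0.
by rewrite /= -/(sgm u p) sp => /eqP; rewrite oner_eq0.
Qed.

Lemma full_iff_rigid T : good T -> (full T <-> rigid T).
Proof.
move=> gT; split; last exact: rigid_full.
by move=> fT u hu i a b; apply: full_rigidk fT hu.
Qed.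

End Gen.

Section Main.
Variables (n : nat) (Y : 'I_n -> Type) (S C : set (prodT Y)).
Hypothesis hC : cross_section S C.

Lemma rel_S x y : related S x y -> S x /\ S y.
Proof. by move=> [F [_ _ FS Fx Fy]]; split; apply: FS. Qed.

Lemma rel_refl x y : related S x y -> related S x x.
Proof. by move=> [F [a b c d e]]; exists F; split. Qed.

Lemma S_rel s : S s -> exists c, C c /\ related S s c.
Proof.
move=> Ss; have [c [[Cc rc] _]] := hC.2 [set y | related S s y] (ex_intro _ s (conj Ss erefl)).
by exists c.
Qed.

Lemma S_refl s : S s -> related S s s.
Proof. by move=> /S_rel [c [_ r]]; apply: rel_refl r. Qed.

Lemma E_rel x y i : related S x y -> E S i (x i) (y i).
Proof.
move=> r; exists 0%N, (fun _ => [set z | related S x z]); split.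
- by move=> j _; exists x; split=> //; case: (rel_S r).
- by exists x; split=> //; apply: rel_refl r.
- by exists y.
- by [].
Qed.

Lemma E_refl s i : S s -> E S i (s i) (s i).
Proof. by move=> /S_refl; apply: E_rel. Qed.

Lemma E_sym i a b : E S i a b -> E S i b a.
Proof.
move=> [m [Rs [h0 h1 h2 h3]]]; exists m, (fun j => Rs (m - j)%N); split.
- by move=> j jm; apply: h0; rewrite leq_subr.
- by rewrite subn0.
- by rewrite subnn.
- move=> j jm; have jm' : (m - j.+1 < m)%N by lia.
  have [w [w1 w2]] := h3 _ jm'.
  have e : (m - j.+1).+1 = (m - j)%N by lia.
  by exists w; split; rewrite -?e.
Qed.

Lemma E_trans i a b c : E S i a b -> E S i b c -> E S i a c.
Proof.
move=> [m1 [R1 [h0 h1 h2 h3]]] [m2 [R2 [g0 g1 g2 g3]]].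
exists (m1 + m2).+1, (fun j => if (j <= m1)%N then R1 j else R2 (j - m1.+1)%N); split.
- move=> j jm /=; case: leqP => hj; first exact: h0.
  by apply: g0; lia.
- by [].
- rewrite /=; have -> : ((m1 + m2).+1 <= m1)%N = false by lia.
  by have -> : ((m1 + m2).+1 - m1.+1 = m2)%N by lia.
- move=> j jm /=.
  case: (ltngtP j m1) => hj.
  + exact: h3.
  + have e : ((j - m1.+1).+1 = j.+1 - m1.+1)%N by lia.
    rewrite -e; apply: g3; lia.
  + subst j; rewrite subnn; exists b; split; [exact: h2 | exact: g1].
Qed.

Lemma Eclass_eq i a b : E S i a b -> Eclass S i a = Eclass S i b.
Proof.
move=> ab; apply/seteqP; split=> x /= h.
- exact: E_trans (E_sym ab) h.
- exact: E_trans ab h.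
Qed.

Lemma Kc (u : forall i, Y i -> Cx) :
  (forall x y, related S x y -> sgm u x = sgm u y) ->
  forall i a b, E S i a b -> u i a = u i b.
Proof.
move=> hu i a b [m [Rs [h0 h1 h2 h3]]].
have comp: forall R, related_component S R -> forall y y', R y -> R y' -> u i (y i) = u i (y' i).
  move=> R [x0 [Sx0 ->]] y y' /= r1 r2.
  suff H: forall y, related S x0 y -> u i (x0 i) = u i (y i).
    by rewrite -(H y r1) (H y' r2).
  move=> z [F [fF fuF FS Fx Fz]].
  apply: (full_rigidk (k := sgm u x0) fuF).
  - by move=> w Fw; apply: esym; apply: hu; exists F; split.
  - by exists x0.
  - by exists z.
have compP: forall j, (j <= m)%N -> forall w w', proj i (Rs j) w -> proj i (Rs j) w' -> u i w = u i w'.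
  move=> j jm w w' [y [Ry <-]] [y' [Ry' <-]]; exact: comp (h0 j jm) y y' Ry Ry'.
suff: forall j, (j <= m)%N -> forall w, proj i (Rs j) w -> u i a = u i w.
  by move=> H; apply: H h2.
elim=> [|j IH] jm w pw; first exact: compP 0%N _ a w h1 pw.
have [w0 [p1 p2]] := h3 j jm.
by rewrite (IH (ltnW jm) w0 p1); apply: compP _ jm _ _ p2 pw.
Qed.

Definition mkF i (a : Y i) (h : proj i S a) : Fcl S i :=
  exist _ (Eclass S i a) (ex_intro _ a (conj h erefl)).

Lemma Fcl_eq i (A B : Fcl S i) : proj1_sig A = proj1_sig B -> A = B.
Proof.
case: A => A hA; case: B => B hB /= e; subst.
by congr exist; apply: Prop_irrelevance.
Qed.

Definition rep i (A : Fcl S i) : Y i := proj1_sig (cid (proj2_sig A)).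

Lemma repP i (A : Fcl S i) : proj i S (rep A) /\ proj1_sig A = Eclass S i (rep A).
Proof. exact: (proj2_sig (cid (proj2_sig A))). Qed.

Lemma projS s i : S s -> proj i S (s i).
Proof. by move=> Ss; exists s. Qed.

Definition Phi s (h : S s) : prodT (Fcl S) := fun i => mkF (projS i h).

Lemma rep_E i (A : Fcl S i) c : proj1_sig A = Eclass S i (c i) -> S c -> E S i (rep A) (c i).
Proof.
move=> eA Sc; have [_ e] := repP A.
have : Eclass S i (c i) (c i) by exact: E_refl.
by rewrite -eA e.
Qed.

Lemma Phi_in s (h : S s) : phiC S C (Phi h).
Proof.
have [c [Cc r]] := S_rel h; exists c; split=> // i /=.
by apply: Eclass_eq; apply: E_rel r.
Qed.

Lemma Phi_eq c (h : S c) z : (forall i, proj1_sig (z i) = Eclass S i (c i)) -> z = Phi h.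
Proof.
by move=> hz; apply: functional_extensionality_dep => i; apply: Fcl_eq; rewrite hz.
Qed.

Lemma goodphi : good S -> good (phiC S C).
Proof.
move=> gS g.
pose f y := match pselect (S y) with left h => g (Phi h) | right _ => 0 end.
have [u hu] := gS f.
have fS: forall y (h : S y), f y = g (Phi h).
  move=> y h; rewrite /f; case: (pselect (S y)) => [h'|/(_ h)//].
  by rewrite (Prop_irrelevance h' h).
have Kh: forall i a b, E S i a b -> u i a = u i b.
  apply: Kc => x y r; have [Sx Sy] := rel_S r.
  rewrite /sgm -(hu x Sx) -(hu y Sy) (fS x Sx) (fS y Sy); congr g.
  apply: Phi_eq => i /=; apply: Eclass_eq; exact: E_rel.
exists (fun i A => u i (rep A)).
move=> z [c [Cc hz]]; have Sc := hC.1 c Cc.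
rewrite (eq_bigr (fun i => u i (c i))); last by move=> i _; apply: Kh; apply: rep_E (hz i) Sc.
by rewrite (Phi_eq Sc hz) -fS hu.
Qed.

Lemma rigS_phi : rigid S -> rigid (phiC S C).
Proof.
move=> rS v hv.
pose u i x := match pselect (proj i S x) with left h => v i (mkF h) | right _ => 0 end.
have uE: forall s (h : S s) i, u i (s i) = v i (Phi h i).
  move=> s h i; rewrite /u; case: (pselect (proj i S (s i))) => [h'|[]]; last exact: projS.
  by congr (v i); apply: Fcl_eq.
have u0: forall s, S s -> sgm u s = 0.
  move=> s h; rewrite /sgm (eq_bigr _ (fun i _ => uE s h i)); exact: hv _ (Phi_in h).
have key: forall i A, proj i (phiC S C) A -> exists c, S c /\ v i A = u i (c i).
  move=> i A [z [[c [Cc hz]] <-]]; have Sc := hC.1 _ Cc.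
  by exists c; split=> //; rewrite (uE c Sc) (Phi_eq Sc hz).
move=> i A B pA pB.
have [c [Sc ->]] := key i A pA; have [c' [Sc' ->]] := key i B pB.
exact: rS u0 i _ _ (projS i Sc) (projS i Sc').
Qed.

Lemma rigphi_S : rigid (phiC S C) -> rigid S.
Proof.
move=> rP u hu.
have Kh: forall i a b, E S i a b -> u i a = u i b.
  by apply: Kc => x y r; have [Sx Sy] := rel_S r; rewrite !hu.
pose v i (A : Fcl S i) := u i (rep A).
have vPhi: forall c (h : S c) i, v i (Phi h i) = u i (c i).
  by move=> c h i; apply: Kh; apply: rep_E.
have v0: forall z, phiC S C z -> sgm v z = 0.
  move=> z [c [Cc hz]]; have Sc := hC.1 _ Cc.
  rewrite (Phi_eq Sc hz) /sgm (eq_bigr _ (fun i _ => vPhi c Sc i)); exact: hu.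
have key: forall i s, S s -> exists z, phiC S C z /\ u i (s i) = v i (z i).
  move=> i s Ss; have [c [Cc r]] := S_rel Ss; have Sc := hC.1 _ Cc.
  exists (Phi Sc); split; first by exists c.
  by rewrite vPhi; apply: Kh; apply: E_rel r.
move=> i a b [s [Ss <-]] [s' [Ss' <-]].
have [z [pz ->]] := key i s Ss; have [z' [pz' ->]] := key i s' Ss'.
by apply: (rP v v0 i); [exists z | exists z'].
Qed.

End Main.

Theorem lemma1 (n : nat) (X : 'I_n -> Type)
  (hX : forall i, inhabited (X i))
  (S : set (prodT X)) (hS : good S)
  (C : set (prodT X)) (hC : cross_section S C) :
  good (phiC S C) /\ (full S <-> full (phiC S C)).
Proof.
have gP := goodphi hC hS.
split=> //.
rewrite (propext (full_iff_rigid hS)) (propext (full_iff_rigid gP)).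
split; [exact: rigS_phi | exact: rigphi_S].
Qed.
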